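(* For every formula $A$ of $\mathsf{LTL}^{\ll}$, every model $\sigma$ and every $i \in \mathbb{N}$: $\sigma, i \models \top \sim A$ if and only if $\sigma, i \models \Diamond\Box A$. That is, the formula $\top \sim A$ is equivalent to the formula $\Diamond \Box A$.
   Context: Fix a set $\mathsf{Prop}$ of atomic propositions. Formulas of $\mathsf{LTL}^{\ll}$ are built from atomic propositions $P \in \mathsf{Prop}$ by $\lnot A$, $A \land B$, $\mathsf{X} A$, $A \mathbin{\mathsf{U}} B$ and $A \ll B$; $\lor$ is defined from $\lnot,\land$ as usual. Set $\top := P \lor \lnot P$ for a fixed $P \in \mathsf{Prop}$, $\Diamond B := \top \mathbin{\mathsf{U}} B$, $\Box B := \lnot \Diamond \lnot B$, and $A \sim B := \lnot(A \ll B) \land \lnot(B \ll A)$. A model $\sigma$ is an $\omega$-word $\sigma_0\sigma_1\sigma_2\ldots$ over the alphabet $2^{\mathsf{Prop}}$. Satisfaction is defined by: $\sigma,i \models P$ iff $P \in \sigma_i$; $\sigma,i\models \lnot A$ iff not $\sigma,i\models A$; $\sigma,i\models A\land B$ iff both hold; $\sigma,i\models \mathsf{X}A$ iff $\sigma,i+1\models A$; $\sigma,i\models A\mathbin{\mathsf{U}}B$ iff there is $j\ge i$ with $\sigma,j\models B$ and $\sigma,k\models A$ for all $i\le k<j$; $\sigma,i\models A\ll B$ iff for every $b$ there exists $j$ with $\mathrm{card}(A_\sigma^{i,j}) + b \le \mathrm{card}(B_\sigma^{i,j})$, where $A_\sigma^{i,j} := \{k \in \mathbb{N} : i \le k \le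 j,\ \sigma,k\models A\}$ (quantifiers over $b$ and $j$ range over natural numbers). *)

(* Defs.v *)
From Stdlib Require Import Arith ClassicalEpsilon.

Inductive formula (AP : Type) : Type :=
| Atom : AP -> formula AP
| Not : formula AP -> formula AP
| And : formula AP -> formula AP -> formula AP
| Next : formula AP -> formula AP
| Until : formula AP -> formula AP -> formula AP
| LL : formula AP -> formula AP -> formula AP.

Arguments Atom {AP}. Arguments Not {AP}. Arguments And {AP}.
Arguments Next {AP}. Arguments Until {AP}. Arguments LL {AP}.

(* A model: an omega-word over 2^AP, position i gives the set of true atoms. *)
Definition model (AP : Type) := nat -> AP -> Prop.

Definition Or {AP} (A B : formula AP) : formula AP := Not (And (Not A) (Not B)).
Definition Top {AP} (p : AP) : formula AP := Or (Atom p) (Not (Atom p)).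
Definition Diamond {AP} (p : AP) (B : formula AP) : formula AP := Until (Top p) B.
Definition Box {AP} (p : AP) (B : formula AP) : formula AP := Not (Diamond p (Not B)).
Definition Sim {AP} (A B : formula AP) : formula AP := And (Not (LL A B)) (Not (LL B A)).

Definition ind (P : Prop) : nat :=
  if excluded_middle_informative P then 1 else 0.

(* card {k | i <= k <= j, Q k}: number of k in [i, i+m] with Q k, where j = i + m;
   for j < i the set is empty. *)
Fixpoint count_from (Q : nat -> Prop) (i m : nat) : nat :=
  match m with
  | 0 => ind (Q i)
  | S m' => count_from Q i m' + ind (Q (i + S m'))
  end.

Definition card_between (Q : nat -> Prop) (i j : nat) : nat :=
  if j <? i then 0 else count_from Q i (j - i).

Fixpoint sat {AP} (s : model AP) (i : nat) (f : formula AP) : Prop :=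
  match f with
  | Atom p => s i p
  | Not A => ~ sat s i A
  | And A B => sat s i A /\ sat s i B
  | Next A => sat s (S i) A
  | Until A B => exists j, i <= j /\ sat s j B /\ (forall k, i <= k < j -> sat s k A)
  | LL A B => forall b : nat, exists j : nat,
      card_between (fun k => sat s k A) i j + b <= card_between (fun k => sat s k B) i j
  end.

(* Main.v *)
Require Import Defs.
From Stdlib Require Import Arith Lia Classical ClassicalEpsilon.

Lemma ind_true (P : Prop) : P -> ind P = 1.
Proof. intro H. unfold ind. destruct (excluded_middle_informative P); tauto. Qed.
Lemma ind_false (P : Prop) : ~ P -> ind P = 0.
Proof. intro H. unfold ind. destruct (excluded_middle_informative P); tauto. Qed.
Lemma ind_le (P : Prop) : ind P <= 1.
Proof. unfold ind. destruct (excluded_middle_informative P); lia. Qed.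
Lemma ind_compl (P : Prop) : ind P + ind (~ P) = 1.
Proof. unfold ind. destruct (excluded_middle_informative P);
  destruct (excluded_middle_informative (~P)); tauto || lia. Qed.

Lemma count_true (T : nat -> Prop) i m : (forall k, T k) -> count_from T i m = S m.
Proof. intro H. induction m; simpl; rewrite ?IHm, ind_true; auto; lia. Qed.

Lemma count_compl (Q : nat -> Prop) i m :
  count_from Q i m + count_from (fun k => ~ Q k) i m = S m.
Proof. induction m; simpl.
  - apply ind_compl.
  - pose proof (ind_compl (Q (i + S m))). lia. Qed.

Lemma count_le (Q : nat -> Prop) i m : count_from Q i m <= S m.
Proof. induction m as [|m IH]; simpl.
  - apply ind_le.
  - pose proof (ind_le (Q (i + S m))); lia. Qed.

Lemma count_mono (Q : nat -> Prop) i m d : count_from Q i m <= count_from Q i (m + d).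
Proof. induction d. rewrite Nat.add_0_r; lia.
  rewrite Nat.add_succ_r. simpl. lia. Qed.

Lemma count_strict (Q : nat -> Prop) i m m2 : m < m2 -> Q (i + m2) ->
  count_from Q i m + 1 <= count_from Q i m2.
Proof. intros H HQ. destruct m2 as [|m2']; [lia|]. simpl.
  rewrite (ind_true _ HQ). pose proof (count_mono Q i m (m2' - m)).
  replace (m + (m2' - m)) with m2' in H0 by lia. lia. Qed.

Lemma count_bound (R : nat -> Prop) i n m : (forall t, n <= t -> ~ R (i + t)) ->
  count_from R i m <= n.
Proof. intro H. assert (count_from R i m <= Nat.min (S m) n); [|lia].
  induction m; cbn [count_from].
  - destruct n. rewrite ind_false. lia. rewrite <- (Nat.add_0_r i). apply H; lia.
    pose proof (ind_le (R i)); lia.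
  - destruct (le_lt_dec n (S m)).
    + rewrite ind_false by (apply H; lia). lia.
    + pose proof (ind_le (R (i + S m))). lia.
Qed.

Theorem mainTheorem1 (AP : Type) (p : AP) (A : formula AP) (s : model AP) (i : nat) :
  sat s i (Sim (Top p) A) <-> sat s i (Diamond p (Box p A)).
Proof.
  assert (Htop : forall k, sat s k (Top p)) by (intro k; simpl; tauto).
  assert (Hct : forall j, card_between (fun k => sat s k (Top p)) i j
     = card_between (fun k => sat s k A) i j + card_between (fun k => ~ sat s k A) i j).
  { intro j. unfold card_between. destruct (j <? i); auto.
    rewrite count_compl. apply count_true. auto. }
  split.
  - intros [_ H2]. apply NNPP. intro HnD. apply H2. clear H2.
    intro b. change (exists j, card_between (fun k => sat s k A) i j + b <= card_between (fun k => sat s k (Top p)) i j).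
    assert (forall b, exists j, b <= card_between (fun k => ~ sat s k A) i j); [|
      destruct (H b) as [j Hj]; exists j; rewrite Hct; lia].
    intro b0. induction b0.
    + exists i; lia.
    + destruct IHb0 as [j Hj].
      destruct (classic (exists k, Nat.max i j < k /\ ~ sat s k A)) as [[k [Hk1 Hk2]]|Hno].
      * exists k. unfold card_between in *.
        destruct (k <? i) eqn:E1; [apply Nat.ltb_lt in E1; lia|].
        destruct (j <? i) eqn:E2.
        -- simpl in Hj. assert (b0 = 0) by lia. subst.
           pose proof (count_strict (fun k => ~ sat s k A) i 0 (k - i)).
           replace (i + (k - i)) with k in H by lia. pose proof (H ltac:(lia) Hk2). lia.
        -- pose proof (count_strict (fun k => ~ sat s k A) i (j - i) (k - i)).
           replace (i + (k - i)) with k in H by lia. pose proof (H ltac:(lia) Hk2). lia.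
      * exfalso. apply HnD. cbn [sat]. exists (S (Nat.max i j)). split; [lia|].
        split.
        -- intros [j' [Hj' [Hn _]]]. apply Hno. exists j'. split; [lia|exact Hn].
        -- intros; apply Htop.
  - intros [j [Hij [HB _]]]. cbn [sat] in HB. split.
    + intro H. destruct (H 1) as [j' Hj']. change (card_between (fun k => sat s k (Top p)) i j' + 1 <= card_between (fun k => sat s k A) i j') in Hj'. rewrite Hct in Hj'. lia.
    + intro H. destruct (H (S (j - i))) as [j' Hj']. change (card_between (fun k => sat s k A) i j' + S (j - i) <= card_between (fun k => sat s k (Top p)) i j') in Hj'. rewrite Hct in Hj'.
      unfold card_between in Hj'. destruct (j' <? i); [lia|].
      assert (count_from (fun k => ~ sat s k A) i (j' - i) <= j - i); [|lia].
      apply count_bound. intros t Ht HnA. apply HB. exists (i + t).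
      split; [lia|]. split; [exact HnA|]. intros; apply Htop.
Qed.
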